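(* For integers $0\le a<b$ let $\Delta_3([a,b))$ denote the number of evil integers in $[a,b)$ divisible by $3$ minus the number of odious integers in $[a,b)$ divisible by $3$ (both even and odd integers are counted). Then: 1) For every integer $n\ge 1$: $\Delta_3([0,2^n))=2\cdot 3^{\frac n2-1}$ if $n$ is even, and $\Delta_3([0,2^n))=3^{\frac{n-1}{2}}$ if $n$ is odd. 2) For integers $n,m$: $$\Delta_3([2^n,2^n+2^m))=\begin{cases}3^{\lfloor\frac{m-1}{2}\rfloor}, & n \text{ odd},\ 1\le m\le n-1,\\ 3^{\frac m2-1}, & n \text{ and } m \text{ even},\ 2\le m\le n-2,\\ 0, & n \text{ even},\ m \text{ odd},\ 1\le m\le n-1.\end{cases}$$ 3) For integers $n,m$: $$\Delta_3([2^n+2^{n-2},\,2^n+2^{n-2}+2^m))=\begin{cases}-3^{\lfloor\frac{m-1}{2}\rfloor}, & n \text{ even},\ 1\le m\le n-3,\\ -3^{\frac m2-1}, & n \text{ odd},\ m \text{ even},\ 2\le m\le n-3,\\ 0, & n \text{ and } m \text{ odd},\ 1\le m\le n-4.\end{cases}$$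
   Context: A nonnegative integer is called evil if its binary expansion contains an even number of 1's, and odious if it contains an odd number of 1's; in particular $0$ is evil. An interval $[a,b)$ means the set of integers $x$ with $a\le x<b$. *)

(* Defs.v *)
From mathcomp Require Import all_boot all_order all_algebra.
Set Implicit Arguments. Unset Strict Implicit. Unset Printing Implicit Defensive.
Import GRing.Theory Num.Theory.

Fixpoint popcount_aux (fuel x : nat) : nat :=
  match fuel with
  | 0 => 0
  | f.+1 => if x == 0 then 0 else odd x + popcount_aux f x./2
  end.
Definition popcount (x : nat) : nat := popcount_aux x x.

Definition evil (x : nat) : bool := ~~ odd (popcount x).
Definition odious (x : nat) : bool := odd (popcount x).

Definition Delta3 (a b : nat) : int :=
  (#|[set x : 'I_b | (a <= x) && (3 %| x) && evil x]|)%:Z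
  - (#|[set x : 'I_b | (a <= x) && (3 %| x) && odious x]|)%:Z.

(* Main.v *)
Require Import Defs.
From mathcomp Require Import all_boot all_order all_algebra.
From mathcomp Require Import zify ring.
Import GRing.Theory Num.Theory.
Local Open Scope ring_scope.

Lemma pa_fuel f g x : (x <= f)%N -> (x <= g)%N -> popcount_aux f x = popcount_aux g x.
Proof.
elim: f g x => [|f IH] [|g] x /=.
- by [].
- by rewrite leqn0 => /eqP -> _.
- by move=> _; rewrite leqn0 => /eqP ->; rewrite eqxx.
- move=> hf hg; case: eqP => // /eqP x0; congr (_ + _)%N; apply: IH.
  + rewrite -divn2; lia.
  + rewrite -divn2; lia.
Qed.

Lemma pc_step x : popcount x = (odd x + popcount x./2)%N.
Proof.
rewrite /popcount; case: x => [|x] //=.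
congr (_ + _)%N; apply: pa_fuel => //; rewrite ?ltnS ?half_leq // -?divn2; lia.
Qed.

Lemma pc_top n y : (y < 2 ^ n)%N -> popcount (2 ^ n + y) = (popcount y).+1.
Proof.
elim: n y => [|n IH] y.
  by rewrite expn0 ltnS leqn0 => /eqP ->.
move=> hy; rewrite pc_step [popcount y]pc_step.
have -> : (2 ^ n.+1 + y)./2 = (2 ^ n + y./2)%N by rewrite -!divn2 expnS; lia.
rewrite IH; last by rewrite -divn2; move: hy; rewrite expnS; lia.
by rewrite oddD oddX /= addnS.
Qed.

Lemma pc4 y : [/\ popcount (4 * y) = popcount y, popcount (4 * y + 1) = (popcount y).+1,
  popcount (4 * y + 2) = (popcount y).+1 & popcount (4 * y + 3) = (popcount y).+2].
Proof.
have h2 : forall z, popcount (2 * z) = popcount z.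
  move=> z; rewrite pc_step oddM /=; congr popcount; rewrite -divn2; lia.
have h21 : forall z, popcount (2 * z + 1) = (popcount z).+1.
  move=> z; rewrite pc_step oddD oddM /=; congr (_.+1); congr popcount; rewrite -divn2; lia.
have -> : (4 * y + 3 = 2 * (2 * y + 1) + 1)%N by lia.
have -> : (4 * y + 2 = 2 * (2 * y + 1))%N by lia.
have -> : (4 * y + 1 = 2 * (2 * y) + 1)%N by lia.
have -> : (4 * y = 2 * (2 * y))%N by lia.
by rewrite !h2 !h21 h2.
Qed.

Definition t (x : nat) : int := (-1) ^+ popcount x.

Definition S n r : int := \sum_(0 <= y < 2 ^ n) ((y %% 3)%N == r)%:R * t y.

Lemma sum4 (F : nat -> int) m :
  \sum_(0 <= x < 4 * m) F x = \sum_(0 <= y < m) (F (4*y)%N + F (4*y+1)%N + F (4*y+2)%N + F (4*y+3)%N).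
Proof.
elim: m => [|m IH]; first by rewrite muln0 !big_geq.
have -> : (4 * m.+1 = (4 * m).+4)%N by lia.
rewrite !big_nat_recr //= IH !addn1 !addn2 !addn3 !addrA.
by [].

Qed.

Lemma S_rec n r : (r < 3)%N ->
  S n.+2 r = 2 * S n r - S n ((r + 1) %% 3)%N - S n ((r + 2) %% 3)%N.
Proof.
move=> hr; rewrite /S.
have -> : (2 ^ n.+2 = 4 * 2 ^ n)%N by rewrite !expnS; lia.
rewrite sum4 mulr_sumr -!sumrB; apply: eq_bigr => y _.
case: (pc4 y) => e0 e1 e2 e3; rewrite /t e0 e1 e2 e3 !exprS.
have E0 : (((4 * y) %% 3 == r) = (y %% 3 == r))%N by apply/eqP/eqP; lia.
have E1 : (((4 * y + 1) %% 3 == r) = (y %% 3 == (r + 2) %% 3))%N by apply/eqP/eqP; lia.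
have E2 : (((4 * y + 2) %% 3 == r) = (y %% 3 == (r + 1) %% 3))%N by apply/eqP/eqP; lia.
have E3 : (((4 * y + 3) %% 3 == r) = (y %% 3 == r))%N by apply/eqP/eqP; lia.
rewrite E0 E1 E2 E3; ring.
Qed.

Lemma S_odd k r : (r < 3)%N ->
  S (k.*2.+1) r = (3 ^ k)%N%:Z * (if r == 0%N then 1 else if r == 1%N then -1 else 0).
Proof.
elim: k r => [|k IH] r hr.
  rewrite /S /= !big_nat_recr //= big_geq // /t /=.
  by case: r hr => [|[|[|r]]] //=; rewrite ?mul1r ?mul0r ?add0r ?addr0.
rewrite doubleS S_rec // !IH ?ltn_pmod //.
rewrite expnS PoszM.
by case: r hr => [|[|[|r]]] //= _; ring.
Qed.

Lemma S_even k r : (r < 3)%N ->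
  S (k.*2.+2) r = (3 ^ k)%N%:Z * (if r == 0%N then 2 else -1).
Proof.
elim: k r => [|k IH] r hr.
  rewrite /S /= !big_nat_recr //= big_geq // /t /=.
  by case: r hr => [|[|[|r]]] //= _; rewrite /popcount /=; ring.
rewrite doubleS S_rec // !IH ?ltn_pmod //.
rewrite expnS PoszM.
by case: r hr => [|[|[|r]]] //= _; ring.
Qed.

Lemma Delta_sum0 a b : Delta3 a b =
  \sum_(0 <= i < b) ((a <= i) && (3 %| i))%N%:R * t i.
Proof.
rewrite /Delta3 -!sum1dep_card -!natz !natr_sum big_mkord.

rewrite [X in X - _]big_mkcond [X in _ - X]big_mkcond -sumrB.
apply: eq_bigr => i _ /=.
rewrite /t /evil /odious -signr_odd.
by case: ((a <= i) && (3 %| i))%N; case: (odd (popcount i)) => /=; rewrite ?expr1 ?expr0 ?mul1r ?mul0r ?subr0 ?sub0r.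
Qed.

Lemma Delta_sum a c : Delta3 a (a + c) =
  \sum_(0 <= i < c) (3 %| (i + a))%N%:R * t (i + a).
Proof.
rewrite Delta_sum0 (@big_cat_nat _ _ _ a) ?leq_addr // /=.
rewrite big1_seq ?add0r; last first.
  move=> i; rewrite mem_index_iota => ha.
  have -> : (a <= i)%N = false by lia.
  by rewrite /= mul0r.
rewrite -{1}(add0n a) big_addn addnC addnK.
apply: eq_bigr => i _; by rewrite leq_addl.
Qed.

Lemma exp2_mod3 n : (2 ^ n %% 3 = if odd n then 2 else 1)%N.
Proof.
elim: n => [|n IH] //; rewrite expnS -modnMmr IH /=.
by case: (odd n).
Qed.

Lemma Delta_S a m r (s : int) :
  (forall i, (i < 2 ^ m)%N -> t (i + a) = s * t i) ->
  (forall i, (3 %| i + a)%N = ((i %% 3)%N == r)) ->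
  Delta3 a (a + 2 ^ m) = s * S m r.
Proof.
move=> Ht Hd; rewrite Delta_sum /S mulr_sumr big_nat_cond [RHS]big_nat_cond.
apply: eq_bigr => i /andP [/andP [_ hi] _]; rewrite Ht // Hd; ring.
Qed.

Lemma par n : (exists k, n = k.*2.+1) \/ (exists k, n = k.*2).
Proof.
have := odd_double_half n; case: (odd n) => /= <-; [left|right]; by exists n./2.
Qed.

Lemma S_closed m r : (1 <= m)%N -> (r < 3)%N ->
  S m r = if odd m then (3 ^ m.-1./2)%N%:Z * (if r == 0%N then 1 else if r == 1%N then -1 else 0)
          else (3 ^ (m./2 - 1))%N%:Z * (if r == 0%N then 2 else -1).
Proof.
move=> hm hr; case: (par m) hm => [[k ->]|[[|k] ->]] hm //.
  by rewrite S_odd //= odd_double /= doubleK.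
have -> : (k.+1.*2 = k.*2.+2)%N by [].
by rewrite S_even //= odd_double doubleK subn1.
Qed.

Lemma t_top n y : (y < 2 ^ n)%N -> t (y + 2 ^ n) = - t y.
Proof. by move=> h; rewrite /t addnC pc_top // exprS mulN1r. Qed.

Lemma Delta_part2 n m : (1 <= m)%N -> (m < n)%N ->
  Delta3 (2 ^ n) (2 ^ n + 2 ^ m) = - S m (if odd n then 1 else 2)%N.
Proof.
move=> hm hmn; rewrite -mulN1r; apply: Delta_S.
  move=> i hi; rewrite t_top ?mulN1r //.
  apply: (leq_trans hi); rewrite leq_exp2l //; exact: ltnW.
move=> i; have := exp2_mod3 n; rewrite /dvdn.
case: (odd n) => h; apply/eqP/eqP; lia.
Qed.

Lemma Delta_part3 n m : (m + 3 <= n)%N ->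
  Delta3 (2 ^ n + 2 ^ (n - 2)) (2 ^ n + 2 ^ (n - 2) + 2 ^ m) = S m (if odd n then 2 else 1)%N.
Proof.
move=> hmn; rewrite -[S _ _]mul1r; apply: Delta_S.
  have e : (2 ^ n = 4 * 2 ^ (n - 2))%N by rewrite -[4%N]/(2 ^ 2)%N -expnD; congr (_ ^ _)%N; lia.
  have hm : (2 ^ m <= 2 ^ (n - 2))%N by rewrite leq_exp2l //; lia.
  move=> i hi; rewrite /t.
  have -> : (i + (2 ^ n + 2 ^ (n - 2)) = 2 ^ n + (2 ^ (n - 2) + i))%N by lia.
  rewrite pc_top; last by lia.
  rewrite pc_top; last by lia.
  by rewrite !exprS; ring.
have e : (2 ^ n = 4 * 2 ^ (n - 2))%N by rewrite -[4%N]/(2 ^ 2)%N -expnD; congr (_ ^ _)%N; lia.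
move=> i; have := exp2_mod3 (n - 2); rewrite /dvdn e.
have -> : odd (n - 2) = odd n by rewrite oddB; [rewrite addbF | lia].
case: (odd n) => h; apply/eqP/eqP; lia.
Qed.

Lemma even_half m : ~~ odd m -> (0 < m)%N -> m.-1./2 = (m./2 - 1)%N.
Proof.
case: (par m) => [[k ->]|[[|k] ->]] //=; first by rewrite odd_double.
move=> _ _; rewrite -!divn2 -!muln2; lia.
Qed.

Theorem theorem3 :
  (* Part 1 *)
  (forall n : nat, (1 <= n)%N ->
     Delta3 0 (2 ^ n) =
       (if odd n then (3 ^ (n.-1./2))%:Z else 2 * (3 ^ (n./2 - 1))%:Z))
  /\
  (* Part 2 *)
  (forall n m : nat,
     (odd n -> (1 <= m)%N -> (m <= n - 1)%N ->
        Delta3 (2 ^ n) (2 ^ n + 2 ^ m) = (3 ^ (m.-1./2))%:Z) /\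
     (~~ odd n -> ~~ odd m -> (2 <= m)%N -> (m + 2 <= n)%N ->
        Delta3 (2 ^ n) (2 ^ n + 2 ^ m) = (3 ^ (m./2 - 1))%:Z) /\
     (~~ odd n -> odd m -> (1 <= m)%N -> (m + 1 <= n)%N ->
        Delta3 (2 ^ n) (2 ^ n + 2 ^ m) = 0))
  /\
  (* Part 3 *)
  (forall n m : nat,
     (~~ odd n -> (1 <= m)%N -> (m + 3 <= n)%N ->
        Delta3 (2 ^ n + 2 ^ (n - 2)) (2 ^ n + 2 ^ (n - 2) + 2 ^ m)
          = - (3 ^ (m.-1./2))%:Z) /\
     (odd n -> ~~ odd m -> (2 <= m)%N -> (m + 3 <= n)%N ->
        Delta3 (2 ^ n + 2 ^ (n - 2)) (2 ^ n + 2 ^ (n - 2) + 2 ^ m)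
          = - (3 ^ (m./2 - 1))%:Z) /\
     (odd n -> odd m -> (1 <= m)%N -> (m + 4 <= n)%N ->
        Delta3 (2 ^ n + 2 ^ (n - 2)) (2 ^ n + 2 ^ (n - 2) + 2 ^ m) = 0)).
Proof.
split; [|split].
- move=> n hn.
  have -> : Delta3 0 (2 ^ n) = S n 0.
    have H := @Delta_S 0 n 0 1; rewrite add0n mul1r in H; apply: H => i.
      by rewrite addn0 mul1r.
    by rewrite addn0.
  rewrite S_closed //; case: ifP => ho /=; rewrite ?mulr1 //.
  by rewrite mulrC.
- move=> n m; split; [|split].
  + move=> hn hm hmn; rewrite Delta_part2; [|lia|lia].
    rewrite hn S_closed //; case: ifP => ho /=; rewrite ?mulrN1 ?opprK //.
    by rewrite even_half // ho.
  + move=> hn hm hm2 hmn; rewrite Delta_part2; [|lia|lia].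
    rewrite (negbTE hn) S_closed; [|lia|by []].
    by rewrite (negbTE hm) /= mulrN1 opprK.
  + move=> hn hm hm1 hmn; rewrite Delta_part2; [|lia|lia].
    by rewrite (negbTE hn) S_closed // hm /= mulr0 oppr0.
- move=> n m; split; [|split].
  + move=> hn hm hmn; rewrite Delta_part3 //.
    rewrite (negbTE hn) S_closed //; case: ifP => ho /=; rewrite ?mulrN1 //.
    by rewrite even_half // ho.
  + move=> hn hm hm2 hmn; rewrite Delta_part3 //.
    rewrite hn S_closed; [|lia|by []].
    by rewrite (negbTE hm) /= mulrN1.
  + move=> hn hm hm1 hmn; rewrite Delta_part3; last by lia.
    by rewrite hn S_closed // hm /= mulr0.
Qed.
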